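(* Let $S=(X,X_0,X_S,U,\rightarrow,Y,H)$ be a metric system with metric $\mathbf{d}$ on $Y$, let $\delta\geq 0$, and let $S_I=(X_I,X_{I0},U,\rightarrow_I)$ be its $\delta$-approximate initial-state estimator. Then for every $(x_0,q_0)\in X_{I0}$ and every finite run $(x_0,q_0)\xrightarrow{u_1}_I (x_1,q_1)\xrightarrow{u_2}_I\cdots\xrightarrow{u_n}_I (x_n,q_n)$ of $S_I$ we have: (i) $x_n\xrightarrow{u_n}x_{n-1}\xrightarrow{u_{n-1}}\cdots\xrightarrow{u_1}x_0$ is a sequence of transitions of $S$; and (ii) $q_n=\{x_0'\in X:\ \exists\, x_0'\xrightarrow{u_n'}x_1'\xrightarrow{u_{n-1}'}\cdots\xrightarrow{u_1'}x_n' \text{ in } S \text{ (for some inputs } u_i'\in U) \text{ with } \max_{i\in\{0,\dots,n\}}\mathbf{d}(H(x_i),H(x_{n-i}'))\leq\delta\}$.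
   Context: A system is a tuple $S=(X,X_0,X_S,U,\rightarrow,Y,H)$ where $X$ is a (possibly infinite) set of states, $X_0\subseteq X$ the initial states, $X_S\subseteq X$ the secret states, $U$ a set of inputs, $\rightarrow\subseteq X\times U\times X$ a transition relation (write $x\xrightarrow{u}x'$ for $(x,u,x')\in\rightarrow$), $Y$ a set of outputs and $H:X\to Y$ an output map. It is metric if $Y$ carries a metric $\mathbf{d}$. For $x\in X$, $u\in U$, $\mathbf{Pre}_u(x)=\{x'': x''\xrightarrow{u}x\}$, and for $q\subseteq X$, $\mathbf{Pre}_u(q)=\bigcup_{x\in q}\mathbf{Pre}_u(x)$. The $\delta$-approximate initial-state estimator of $S$ is $S_I=(X_I,X_{I0},U,\rightarrow_I)$ with $X_{I0}=\{(x,q)\in X\times 2^X: q=\{x'\in X:\mathbf{d}(H(x),H(x'))\leq\delta\}\}$, and for $(x,q),(x',q')\in X\times 2^X$, $u\in U$: $(x,q)\xrightarrow{u}_I(x',q')$ iff $(x',u,x)\in\rightarrow$ and $q'=\bigcup_{\hat u\in U}\mathbf{Pre}_{\hat u}(q)\cap\{x''\in X:\mathbf{d}(H(x'),H(x''))\leq\delta\}$. $X_I\subseteq X\times 2^X$ is the set of states reachable from $X_{I0}$. *)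

(* Defs.v *)
From Stdlib Require Import Reals.
Open Scope R_scope.

Definition is_metric {Y : Type} (d : Y -> Y -> R) : Prop :=
  (forall y y', 0 <= d y y') /\
  (forall y y', d y y' = 0 <-> y = y') /\
  (forall y y', d y y' = d y' y) /\
  (forall y y' y'', d y y'' <= d y y' + d y' y'').

Definition Pre {X U : Type} (trans : X -> U -> X -> Prop) (u : U) (q : X -> Prop)
  : X -> Prop :=
  fun x'' => exists x, q x /\ trans x'' u x.

Definition ball_states {X Y : Type} (H : X -> Y) (d : Y -> Y -> R) (delta : R)
  (x : X) : X -> Prop :=
  fun x'' => d (H x) (H x'') <= delta.

Definition est_init {X Y : Type} (H : X -> Y) (d : Y -> Y -> R) (delta : R)
  (x : X) (q : X -> Prop) : Prop :=
  q = ball_states H d delta x.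

Definition est_trans {X U Y : Type} (trans : X -> U -> X -> Prop)
  (H : X -> Y) (d : Y -> Y -> R) (delta : R)
  (x : X) (q : X -> Prop) (u : U) (x' : X) (q' : X -> Prop) : Prop :=
  trans x' u x /\
  q' = (fun x'' => (exists uh : U, Pre trans uh q x'') /\ ball_states H d delta x' x'').

(* Main.v *)
Require Import Defs.
From Stdlib Require Import Reals.
From Stdlib Require Import Lia FunctionalExtensionality PropExtensionality.
Open Scope R_scope.

Definition Pk {X U Y : Type} (trans : X -> U -> X -> Prop) (H : X -> Y)
  (d : Y -> Y -> R) (delta : R) (x : nat -> X) (k : nat) (x0' : X) : Prop :=
  exists (x' : nat -> X) (u' : nat -> U),
       x' 0%nat = x0' /\
       (forall i : nat, (i < k)%nat -> trans (x' i) (u' (k - i)%nat) (x' (S i))) /\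
       (forall i : nat, (i <= k)%nat -> d (H (x i)) (H (x' (k - i)%nat)) <= delta).

Lemma step_lemma (X U Y : Type) (trans : X -> U -> X -> Prop)
  (H : X -> Y) (d : Y -> Y -> R) (delta : R)
  (n : nat) (x : nat -> X) (q : nat -> (X -> Prop)) (u : nat -> U)
  (Hinit : est_init H d delta (x 0%nat) (q 0%nat))
  (Hrun : forall i : nat, (i < n)%nat ->
     est_trans trans H d delta (x i) (q i) (u (S i)) (x (S i)) (q (S i))) :
  forall k, (k <= n)%nat -> forall z, q k z <-> Pk trans H d delta x k z.
Proof.
  induction k as [|k IH]; intros Hk z.
  - unfold est_init in Hinit. rewrite Hinit. unfold ball_states, Pk. split.
    + intros Hz. exists (fun _ => z), (fun _ => u 0%nat). split; [reflexivity|].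
      split; [intros; lia|]. intros i Hi. assert (i = 0%nat) by lia. subst. exact Hz.
    + intros [x' [u' [H0 [_ H2]]]]. specialize (H2 0%nat (le_n _)).
      simpl in H2. rewrite H0 in H2. exact H2.
  - destruct (Hrun k ltac:(lia)) as [_ Hq]. rewrite Hq.
    unfold Pre, ball_states. split.
    + intros [[uh [w [Hw Htr]]] Hb].
      apply (IH ltac:(lia)) in Hw. destruct Hw as [y [u' [Hy0 [Hyt Hyd]]]].
      exists (fun j => match j with 0%nat => z | S j => y j end).
      exists (fun j => if Nat.eq_dec j (S k) then uh else u' j).
      split; [reflexivity|]. split.
      * intros i Hi. destruct i as [|i].
        -- replace (S k - 0)%nat with (S k) by lia. destruct (Nat.eq_dec (S k) (S k)); [|congruence]. rewrite Hy0. exact Htr.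
        -- replace (S k - S i)%nat with (k - i)%nat by lia.
           destruct (Nat.eq_dec (k - i) (S k)); [lia|]. apply Hyt. lia.
      * intros i Hi. destruct (Nat.eq_dec i (S k)) as [->|Hne].
        -- replace (S k - S k)%nat with 0%nat by lia. exact Hb.
        -- replace (S k - i)%nat with (S (k - i)) by lia. apply Hyd. lia.
    + intros [x' [u' [H0 [Ht Hdd]]]]. split.
      * exists (u' (S k)), (x' 1%nat). split.
        -- apply (IH ltac:(lia)). exists (fun j => x' (S j)), u'.
           split; [reflexivity|]. split.
           ++ intros i Hi. replace (k - i)%nat with (S k - S i)%nat by lia. apply Ht. lia.
           ++ intros i Hi. replace (S (k - i)) with (S k - i)%nat by lia. apply Hdd. lia.
        -- rewrite <- H0. specialize (Ht 0%nat ltac:(lia)).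
           replace (S k - 0)%nat with (S k) in Ht by lia. exact Ht.
      * specialize (Hdd (S k) (le_n _)). replace (S k - S k)%nat with 0%nat in Hdd by lia.
        rewrite H0 in Hdd. exact Hdd.
Qed.

(* A run (x_0,q_0) -u_1->_I (x_1,q_1) ... -u_n->_I (x_n,q_n) is encoded by
   x : nat -> X, q : nat -> (X -> Prop), u : nat -> U (only u 1 .. u n used). *)
Theorem mainTheorem1
  (X U Y : Type) (X0 XS : X -> Prop) (trans : X -> U -> X -> Prop)
  (H : X -> Y) (d : Y -> Y -> R) (Hd : is_metric d)
  (delta : R) (Hdelta : 0 <= delta)
  (n : nat) (x : nat -> X) (q : nat -> (X -> Prop)) (u : nat -> U)
  (Hinit : est_init H d delta (x 0%nat) (q 0%nat))
  (Hrun : forall i : nat, (i < n)%nat ->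
     est_trans trans H d delta (x i) (q i) (u (S i)) (x (S i)) (q (S i))) :
  (forall i : nat, (i < n)%nat -> trans (x (S i)) (u (S i)) (x i)) /\
  q n = (fun x0' : X =>
     exists (x' : nat -> X) (u' : nat -> U),
       x' 0%nat = x0' /\
       (forall i : nat, (i < n)%nat -> trans (x' i) (u' (n - i)%nat) (x' (S i))) /\
       (forall i : nat, (i <= n)%nat -> d (H (x i)) (H (x' (n - i)%nat)) <= delta)).
Proof.
  split.
  - intros i Hi. exact (proj1 (Hrun i Hi)).
  - apply functional_extensionality. intros z. apply propositional_extensionality.
    exact (step_lemma X U Y trans H d delta n x q u Hinit Hrun n (le_n _) z).
Qed.
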